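(* Let $A, B \in\mathbb{C}^{n\times n}$ be matrices of index at most $1$. If $A\leq^{GD1}B$, then $A\leq\# B$ (right sharp partial order), i.e. $A^2=BA$ and $R(A^* )\subseteq R(B^* )$.
   Context: For $A\in\mathbb{C}^{n\times n}$, $ind(A)$ is the smallest nonnegative integer $k$ with $\mathrm{rank}(A^k)=\mathrm{rank}(A^{k+1})$. $A\{1\}$ is the set of matrices $X$ with $AXA=A$. With $k=ind(A)$, $A\{GD\}$ is the set of matrices $X$ with $AXA=A$, $XA^{k+1}=A^k$, $A^{k+1}X=A^k$ (G-Drazin inverses). A GD1 inverse of $A$ is a matrix $A^{GD1}=A^{GD}AA^-$ with $A^-\in A\{1\}$, $A^{GD}\in A\{GD\}$. We write $A\leq^{GD1}B$ if $AA^{GD1}=BA^{GD1}$ and $A^{GD1}A=A^{GD1}B$ for some GD1 inverse $A^{GD1}$ of $A$. $A^*$ is the conjugate transpose and $R(\cdot)$ the range. *)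

(* Defs.v *)
From mathcomp Require Import all_boot all_order all_algebra.
Set Implicit Arguments. Unset Strict Implicit. Unset Printing Implicit Defensive.
Import Order.TTheory GRing.Theory Num.Theory.
Local Open Scope ring_scope.

(* Matrices over C : numClosedFieldType (e.g. complex numbers), with the
   conjugation Num.conj (notation x^* ). *)

Definition ctmx (C : numClosedFieldType) (m n : nat) (A : 'M[C]_(m, n))
  : 'M[C]_(n, m) := map_mx Num.conj A^T.

(* R(A) ⊆ R(B) for the column spaces (ranges) of A and B:
   column space of X = row space of X^T *)
Definition range_sub (C : numClosedFieldType) (m p q : nat)
  (A : 'M[C]_(m, p)) (B : 'M[C]_(m, q)) : Prop := (A^T <= B^T)%MS.

Definition is_index (C : numClosedFieldType) (n : nat) (A : 'M[C]_n) (k : nat)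
  : Prop :=
  \rank (A ^+ k) = \rank (A ^+ k.+1) /\
  (forall j, (j < k)%N -> \rank (A ^+ j) <> \rank (A ^+ j.+1)).

Definition inner_inv (C : numClosedFieldType) (n : nat) (A X : 'M[C]_n) : Prop :=
  A *m X *m A = A.

Definition GD_inv (C : numClosedFieldType) (n : nat) (A X : 'M[C]_n) : Prop :=
  exists k, is_index A k /\
    [/\ A *m X *m A = A, X *m A ^+ k.+1 = A ^+ k & A ^+ k.+1 *m X = A ^+ k].

Definition GD1_inv (C : numClosedFieldType) (n : nat) (A X : 'M[C]_n) : Prop :=
  exists G Am, GD_inv A G /\ inner_inv A Am /\ X = G *m A *m Am.

Definition GD1_le (C : numClosedFieldType) (n : nat) (A B : 'M[C]_n) : Prop :=
  exists X, GD1_inv A X /\ A *m X = B *m X /\ X *m A = X *m B.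

Definition right_sharp_le (C : numClosedFieldType) (n : nat) (A B : 'M[C]_n)
  : Prop := A *m A = B *m A /\ range_sub (ctmx A) (ctmx B).

(* Main.v *)
Require Import Defs.
From mathcomp Require Import all_boot all_order all_algebra.
Import GRing.Theory Num.Theory.
Local Open Scope ring_scope.

Theorem corollary2p13 (C : numClosedFieldType) (n : nat) (A B : 'M[C]_n) :
  (exists k, is_index A k /\ (k <= 1)%N) ->
  (exists k, is_index B k /\ (k <= 1)%N) ->
  GD1_le A B ->
  A *m A = B *m A /\ range_sub (ctmx A) (ctmx B).
Proof.
move=> [k0 [[hr0 _] hk0]] _ [X [[G [Am [[k [[hr hn] [h1 h2 h3]]] [hAm eX]]]] [hAX hXA]]].
rewrite /inner_inv in hAm.
have hr1 : A = B *m G *m A.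
  have : A *m X *m A = B *m X *m A by rewrite hAX.
  by rewrite eX !mulmxA h1 hAm -!mulmxA (mulmxA A) hAm !mulmxA.
have hXA' : X *m A = G *m A.
  by rewrite eX -!mulmxA (mulmxA A) hAm.
have hGA2 : G *m (A *m A) = A.
  have hk : (k <= 1)%N.
    case: (leqP k k0) => [hkk|hkk]; first exact: leq_trans hkk hk0.
    by have := hn _ hkk.
  clear hn; case: k hk hr h2 h3 => [|[|k]] //= _ _ + _.
    by rewrite expr1 expr0 => hh; rewrite mulmxA hh mul1mx.
split.
  by rewrite -[in RHS]hGA2 !mulmxA -hr1.
have hA : A = A *m X *m B.
  by rewrite -mulmxA -hXA hXA' mulmxA h1.
rewrite /range_sub /ctmx !map_trmx !trmxK.
by rewrite hA !map_mxM submxMl.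
Qed.
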